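(* Let $\alpha\in\mathbb Z^n$ and let $\mathcal S\subseteq\mathbb R^n$ be a convex set such that $\mathrm{conv}(\mathcal S\cap\mathbb Z^n)$ is the nonempty polyhedron $\mathcal P=\{x\in\mathbb R^n: Ax\le b\}$ with $A\in\mathbb Z^{m\times n}$ (rows $a_1^T,\dots,a_m^T$) and $b\in\mathbb R^m$. Assume $\mathrm{rec.cone}(\mathcal S)=\{x: Ax\le 0\}$ and $\inf\{\alpha^Tx: x\in\mathcal S\}>-\infty$. Define $b'_i=\sup\{a_i^Tx: x\in\mathcal S\}$ for $i=1,\dots,m$ and assume every $b'_i$ is finite. Then $$\inf\{\alpha^Tx:x\in\mathcal S\cap\mathbb Z^n\}-\inf\{\alpha^Tx:x\in\mathcal S\}\le n\|\alpha\|_1\Delta\,(1+\|b-b'\|_\infty),$$ where $\Delta$ is the largest absolute value of a determinant of a square submatrix of $A$.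
   Context: $\mathrm{rec.cone}(\mathcal S)=\{d: x+\lambda d\in\mathcal S\ \forall\lambda\ge0,\ \forall x\in\mathcal S\}$; $\mathrm{conv}$ denotes convex hull. *)

(* Defs.v *)
From HB Require Import structures.
From mathcomp Require Import all_boot all_order all_algebra.
From mathcomp Require Import all_classical all_reals.
Set Implicit Arguments. Unset Strict Implicit. Unset Printing Implicit Defensive.
Import Order.TTheory GRing.Theory Num.Theory.
Local Open Scope classical_set_scope.
Local Open Scope ring_scope.

Definition mxR {R : realType} {p q : nat} (M : 'M[int]_(p, q)) : 'M[R]_(p, q) :=
  map_mx (fun z : int => z%:~R) M.

Definition Zpts {R : realType} (n : nat) : set 'cV[R]_n :=
  [set x | exists z : 'cV[int]_n, x = mxR z].

Definition convex_set {R : realType} (n : nat) (S : set 'cV[R]_n) : Prop :=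
  forall x y, S x -> S y -> forall t : R, 0 <= t <= 1 ->
    S (t *: x + (1 - t) *: y).

Definition conv {R : realType} (n : nat) (T : set 'cV[R]_n) : set 'cV[R]_n :=
  [set x | exists (k : nat) (w : 'I_k -> R) (p : 'I_k -> 'cV[R]_n),
     [/\ (forall i, 0 <= w i), \sum_(i < k) w i = 1,
         (forall i, T (p i)) & x = \sum_(i < k) w i *: p i]].

Definition rec_cone {R : realType} (n : nat) (S : set 'cV[R]_n) : set 'cV[R]_n :=
  [set d | forall (lam : R) x, 0 <= lam -> S x -> S (x + lam *: d)].

Definition polyhedron {R : realType} (m n : nat) (A : 'M[R]_(m, n)) (b : 'cV[R]_m)
  : set 'cV[R]_n :=
  [set x | forall i, (A *m x) i 0 <= b i 0].

Definition lin {R : realType} (n : nat) (c x : 'cV[R]_n) : R := (c^T *m x) 0 0.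

Definition Delta (m n : nat) (A : 'M[int]_(m, n)) : nat :=
  \max_(k < minn m n)
    \max_(f : {ffun 'I_k.+1 -> 'I_m} | injectiveb f)
      \max_(g : {ffun 'I_k.+1 -> 'I_n} | injectiveb g)
        `|\det (mxsub f g A)|%N.

Definition norm1 {R : realType} (n : nat) (v : 'cV[R]_n) : R :=
  \sum_(i < n) `|v i 0|.
Definition norminf {R : realType} (n : nat) (v : 'cV[R]_n) : R :=
  \big[Num.max/0]_(i < n) `|v i 0|.

(* Main.v *)
Require Import Defs.
From HB Require Import structures.
From mathcomp Require Import all_boot all_order all_algebra.
From mathcomp Require Import all_classical all_reals.
From mathcomp Require Import ring lra zify.
Import Order.TTheory GRing.Theory Num.Theory.
Local Open Scope ring_scope.
Set Implicit Arguments. Unset Strict Implicit. Unset Printing Implicit Defensive.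

Section FM.
Variable R : realType.

Lemma linD n (a y z : 'cV[R]_n) : lin a (y + z) = lin a y + lin a z.
Proof. by rewrite /lin mulmxDr mxE. Qed.
Lemma linZ n (a y : 'cV[R]_n) t : lin a (t *: y) = t * lin a y.
Proof. by rewrite /lin -scalemxAr mxE. Qed.
Lemma linDl n (a a' y : 'cV[R]_n) : lin (a + a') y = lin a y + lin a' y.
Proof. by rewrite /lin linearD /= mulmxDl mxE. Qed.
Lemma linZl n (a y : 'cV[R]_n) t : lin (t *: a) y = t * lin a y.
Proof. by rewrite /lin linearZ /= -scalemxAl mxE. Qed.
Lemma lin0l n (y : 'cV[R]_n) : lin 0 y = 0.
Proof. by rewrite /lin linear0 mul0mx mxE. Qed.
Lemma lin0r n (a : 'cV[R]_n) : lin a 0 = 0.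
Proof. by rewrite /lin mulmx0 mxE. Qed.
Lemma lin_delta n (a : 'cV[R]_n) j : lin a (delta_mx j 0) = a j 0.
Proof. by rewrite /lin -colE !mxE. Qed.
Lemma linE n (a y : 'cV[R]_n) : lin a y = \sum_i a i 0 * y i 0.
Proof. by rewrite /lin mxE; apply: eq_bigr => i _; rewrite mxE. Qed.

Lemma lb_seq (U : seq R) : exists t, forall u, u \in U -> t <= u.
Proof.
elim: U => [|u U [t Ht]]; first by exists 0.
exists (Num.min u t) => v; rewrite inE => /orP [/eqP ->|/Ht]; first by rewrite ge_min lexx.
by move=> h; rewrite ge_min h orbT.
Qed.

Lemma sep_seq (L U : seq R) : (forall l u, l \in L -> u \in U -> l <= u) ->
  exists t, (forall l, l \in L -> l <= t) /\ (forall u, u \in U -> t <= u).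
Proof.
elim: L => [|l L IH] H.
  by have [t Ht] := lb_seq U; exists t; split.
have [|t [Ht1 Ht2]] := IH.
  by move=> l' u hl hu; apply: H => //; rewrite inE hl orbT.
exists (Num.max l t); split.
  move=> l'; rewrite inE => /orP [/eqP ->|/Ht1 h]; first by rewrite le_max lexx.
  by rewrite le_max h orbT.
move=> u hu; rewrite ge_max Ht2 // andbT; apply: H => //; by rewrite inE eqxx.
Qed.

Lemma frac_le (X Y a c : R) : 0 < a -> c < 0 -> Y * c <= X * a -> X / c <= Y / a.
Proof. move=> ha hc h. rewrite ler_pdivlMr // mulrAC ler_ndivrMr //. Qed.
Lemma frac_le2 (X t c : R) : c < 0 -> X / c <= t -> X >= t * c.
Proof. move=> hc. rewrite ler_ndivrMr //. Qed.
Lemma frac_le3 (X t c : R) : 0 < c -> t <= X / c -> t * c <= X.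
Proof. move=> hc. rewrite ler_pdivlMr //. Qed.

Variable N : nat.
Definition cstr := ('cV[R]_N * R)%type.
Definition sat (y : 'cV[R]_N) (p : cstr) := lin p.1 y <= p.2.

Inductive cone (s : seq cstr) : cstr -> Prop :=
| cone_in p : p \in s -> cone s p
| cone_add p q : cone s p -> cone s q -> cone s (p.1 + q.1, p.2 + q.2)
| cone_scale t p : 0 <= t -> cone s p -> cone s (t *: p.1, t * p.2).

Lemma cone_trans s s' q : (forall p, p \in s' -> cone s p) -> cone s' q -> cone s q.
Proof.
move=> H; elim => //.
  by move=> p0 q0 _ h1 _ h2; apply: cone_add.
by move=> t p0 ht _ h; apply: cone_scale.
Qed.

Definition combj (j : 'I_N) (p q : cstr) : cstr :=
  ((- q.1 j 0) *: p.1 + p.1 j 0 *: q.1, (- q.1 j 0) * p.2 + p.1 j 0 * q.2).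
Definition elim_s (j : 'I_N) (s : seq cstr) : seq cstr :=
  [seq p <- s | (p : cstr).1 j 0 == 0] ++
  [seq combj j p q | p <- [seq p <- s | 0 < (p : cstr).1 j 0], q <- [seq q <- s | (q : cstr).1 j 0 < 0]].

Lemma elim_cone j s p : p \in elim_s j s -> cone s p.
Proof.
rewrite mem_cat => /orP [|/allpairsP [[p1 q1] [/=]]].
  by rewrite mem_filter => /andP [_ h]; apply: cone_in.
rewrite !mem_filter => /andP [hp1 ps] /andP [hq1 qs] ->.
apply: (@cone_add _ ((- q1.1 j 0) *: p1.1, - q1.1 j 0 * p1.2) (p1.1 j 0 *: q1.1, p1.1 j 0 * q1.2));
  apply: cone_scale; try by apply: cone_in.
  by rewrite oppr_ge0 ltW.
by rewrite ltW.
Qed.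

Lemma elim_feas j s y' : (forall p, p \in elim_s j s -> sat y' p) ->
  exists y, forall p, p \in s -> sat y p.
Proof.
move=> H.
pose L := [seq (q.2 - lin q.1 y') / q.1 j 0 | q : cstr <- [seq q <- s | (q : cstr).1 j 0 < 0]].
pose U := [seq (p.2 - lin p.1 y') / p.1 j 0 | p : cstr <- [seq p <- s | 0 < (p : cstr).1 j 0]].
have [|t [Ht1 Ht2]] := @sep_seq L U.
  move=> l u /mapP [q hq ->] /mapP [p hp ->].
  have := H (combj j p q); rewrite /sat /combj /= linDl !linZl.
  rewrite mem_cat; move: (hq) (hp); rewrite !mem_filter => /andP [hq0 _] /andP [hp0 _].
  move=> /(_ _); rewrite orbC (_ : _ \in _) //=; last first.
    by apply/allpairsP; exists (p, q).
  move=> h.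
  apply: frac_le => //; nra.
exists (y' + t *: delta_mx j 0) => p ps; rewrite /sat linD linZ lin_delta.
case: (ltgtP (p.1 j 0) 0) => hp.
- have h : (p.2 - lin p.1 y') / p.1 j 0 <= t.
    by apply: Ht1; apply/mapP; exists p => //; rewrite mem_filter hp ps.
  have := @frac_le2 _ _ _ hp h; lra.
- have h : t <= (p.2 - lin p.1 y') / p.1 j 0.
    by apply: Ht2; apply/mapP; exists p => //; rewrite mem_filter hp ps.
  have := @frac_le3 _ _ _ hp h; lra.
- rewrite hp mulr0 addr0; apply: H.
  by rewrite mem_cat mem_filter hp eqxx ps.
Qed.

Lemma fm k : forall s : seq cstr,
  (forall p, p \in s -> forall j : 'I_N, (k <= j)%N -> p.1 j 0 = 0) ->
  ~ (exists y, forall p, p \in s -> sat y p) ->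
  exists2 be, be < 0 & cone s (0, be).
Proof.
elim: k => [|k IH] s Hs Hn.
  have [p ps hp] : exists2 p, p \in s & ~ sat 0 p.
    apply: contra_notP Hn => h; exists 0 => p ps.
    by apply: contra_notP (h) => hp; exists p.
  have p10 : p.1 = 0 by apply/matrixP => i j; rewrite (ord1 j) (Hs p ps) // mxE.
  exists p.2.
    by move: hp; rewrite /sat lin0r; move/negP; rewrite -ltNge.
  by rewrite -p10 -surjective_pairing; apply: cone_in.
case: (ltnP k N) => hk; last first.
  apply: IH Hn => p ps j hj; apply: (Hs p ps).
  by have := ltn_ord j; lia.
pose j := Ordinal hk.
have [be hbe hc] : exists2 be, be < 0 & cone (elim_s j s) (0, be).
  apply: IH.
- move=> p; rewrite mem_cat => /orP [|/allpairsP [[p1 q1] [/=]]].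
    rewrite mem_filter => /andP [/eqP h0 ps] j' hj'.
    case: (ltnP k j') => h'; first by apply: Hs.
    have -> : j' = j by apply/val_inj => /=; lia.
    exact: h0.
  rewrite !mem_filter => /andP [_ ps] /andP [_ qs] -> j' hj'.
  rewrite /combj /= !mxE.
  case: (ltnP k j') => h'.
    by rewrite (Hs p1 ps j') // (Hs q1 qs j') //; ring.
  have -> : j' = j by apply/val_inj => /=; lia.
  by rewrite mulrC mulrN addrC subrr.
- by move=> [y' hy']; apply: Hn; exact: (@elim_feas _ _ _ hy').
exists be => //; apply: cone_trans hc => p; exact: elim_cone.
Qed.

Lemma farkas_infeas (s : seq cstr) :
  ~ (exists y, forall p, p \in s -> sat y p) ->
  exists2 be, be < 0 & cone s (0, be).
Proof.
apply: (@fm N) => p _ j hj; by have := ltn_ord j; lia.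
Qed.

End FM.

Section Farkas.
Variable R : realType.

Lemma linNl n (a y : 'cV[R]_n) : lin (- a) y = - lin a y.
Proof. by rewrite /lin linearN /= mulNmx mxE. Qed.
Lemma lin_col n (a : 'cV[R]_n) (x : 'cV[R]_1) (z : 'cV[R]_(n + 1)) :
  lin (col_mx a x) z = lin a (usubmx z) + lin x (dsubmx z).
Proof. by rewrite -{1}(vsubmxK z) /lin tr_col_mx mul_row_col mxE. Qed.
Lemma lin_scal1 (be : R) (v : 'cV[R]_1) : lin (be%:M) v = be * v 0 0.
Proof. by rewrite /lin tr_scalar_mx mul_scalar_mx mxE. Qed.
Lemma lin_row m n (M : 'M[R]_(m, n)) i w : lin (row i M)^T w = (M *m w) i 0.
Proof. by rewrite /lin trmxK -row_mul mxE. Qed.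

Lemma mxDZE k (M M' : 'cV[R]_k) t i : (M + t *: M') i 0 = M i 0 + t * M' i 0.
Proof. by rewrite !mxE. Qed.
Lemma mxZE k (M : 'cV[R]_k) t i : (t *: M) i 0 = t * M i 0.
Proof. by rewrite !mxE. Qed.

Lemma sum_col_mx k m1 m2 n1 (F : 'I_k -> 'M[R]_(m1, n1)) (G : 'I_k -> 'M[R]_(m2, n1)) :
  \sum_i col_mx (F i) (G i) = col_mx (\sum_i F i) (\sum_i G i).
Proof.
apply: (big_rec3 (fun a b c => a = col_mx b c)); first by rewrite col_mx0.
by move=> i a b0 c0 _ ->; rewrite add_col_mx.
Qed.

Lemma sum3 (V : zmodType) (a b c a' b' c' : V) :
  (a + b - c) + (a' + b' - c') = (a + a') + (b + b') - (c + c').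
Proof. by rewrite addrACA [X in X + _ = _]addrACA opprD. Qed.

Lemma farkas_aff (m n : nat) (AR : 'M[R]_(m, n)) (b : 'cV[R]_m) (c : 'cV[R]_n) (d : R) :
  (exists y, polyhedron AR b y) ->
  (forall y, polyhedron AR b y -> lin c y <= d) ->
  exists u : 'cV[R]_m, [/\ (forall i, 0 <= u i 0), AR^T *m u = c & lin b u <= d].
Proof.
move=> [y0 Py0] Hd.
pose gen i : 'cV[R]_(n + 1) := col_mx (row i AR)^T (b i 0)%:M.
pose e : 'cV[R]_(n + 1) := col_mx 0 1%:M.
pose h : 'cV[R]_(n + 1) := col_mx c d%:M.
pose s : seq (cstr R (n + 1)) := [seq (gen i, 0) | i <- enum 'I_m] ++ [:: (e, 0); (-h, -1)].
have [be hbe hc] : exists2 be, be < 0 & cone s (0, be).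
  apply: farkas_infeas => -[z Hz].
  have Hi i : (AR *m usubmx z) i 0 + b i 0 * dsubmx z 0 0 <= 0.
    have := Hz (gen i, 0); rewrite /sat /= lin_col lin_row lin_scal1; apply.
    by rewrite mem_cat map_f ?mem_enum.
  have He : dsubmx z 0 0 <= 0.
    have := Hz (e, 0); rewrite /sat /= lin_col lin0l lin_scal1 mxE /= mul1r add0r; apply.
    by rewrite mem_cat !inE eqxx orbT.
  have Hh : 1 <= lin c (usubmx z) + d * dsubmx z 0 0.
    have := Hz (-h, -1); rewrite /sat /= linNl lin_col lin_scal1 lerN2; apply.
    by rewrite mem_cat !inE eqxx !orbT.
  set w := usubmx z in Hi Hh; set tau := dsubmx z 0 0 in Hi He Hh.
  case: (ltgtP tau 0) => ht; last 1 first.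
  - pose t := `|d - lin c y0| + 1.
    have := Hd (y0 + t *: w); rewrite linD linZ.
    have ht0 : 0 <= t by rewrite /t; have := normr_ge0 (d - lin c y0); lra.
    move=> /(_ _) H; have {}H := H _.
    have : lin c y0 + t * lin c w <= d.
      apply: H => i; rewrite mulmxDr -scalemxAr mxDZE.
      have := Hi i; rewrite ht mulr0 addr0 => hi.
      have := Py0 i; have : t * (AR *m w) i 0 <= 0 by rewrite mulr_ge0_le0.
      lra.
    rewrite ht mulr0 addr0 in Hh.
    have : d - lin c y0 <= `|d - lin c y0| by apply: ler_norm.
    have ht1 : t <= t * lin c w by rewrite ler_peMr.
    have ht2 : t = `|d - lin c y0| + 1 by [].
    lra.
  - have hnt : 0 < - tau by rewrite oppr_gt0.
    have := Hd ((- tau)^-1 *: w); rewrite linZ.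
    have Hy : polyhedron AR b ((- tau)^-1 *: w).
      move=> i; rewrite -scalemxAr mxZE ler_pdivrMl //.
      have := Hi i; lra.
    move=> /(_ Hy); rewrite ler_pdivrMl //; nra.
  - by move: He; rewrite leNgt ht.
pose Rep (q : cstr R (n + 1)) := exists (u : 'cV[R]_m) (mu la : R),
  [/\ (forall i, 0 <= u i 0), 0 <= mu, 0 <= la,
      q.1 = \sum_i u i 0 *: gen i + mu *: e - la *: h & q.2 = - la].
have HR : forall q, cone s q -> Rep q.
  move=> q; elim => {q}.
  - move=> p; rewrite mem_cat => /orP [/mapP [i _ ->]|].
      exists (\col_k (k == i)%:R), 0, 0; split => //=.
      + by move=> k; rewrite mxE ler0n.
      + rewrite !scale0r subr0 addr0 (bigD1 i) //= big1 ?addr0.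
          by rewrite mxE eqxx scale1r.
        by move=> k /negPf hk; rewrite mxE hk scale0r.
      + by rewrite oppr0.
    rewrite !inE => /orP [/eqP ->|/eqP ->].
      exists 0, 1, 0; split => //=.
      + by move=> k; rewrite mxE.
      + by rewrite scale0r subr0 big1 ?add0r ?scale1r // => k _; rewrite mxE scale0r.
      + by rewrite oppr0.
    exists 0, 0, 1; split => //=.
    + by move=> k; rewrite mxE.
    + by rewrite scale0r big1 ?add0r ?scale1r ?sub0r // => k _; rewrite mxE scale0r.
  - move=> p q _ [u [mu [la [hu hmu hla h1 h2]]]] _ [u' [mu' [la' [hu' hmu' hla' h1' h2']]]].
    exists (u + u'), (mu + mu'), (la + la'); split => /=.
    + by move=> i; rewrite mxE addr_ge0.
    + exact: addr_ge0.
    + exact: addr_ge0.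
    + rewrite h1 h1' sum3 -big_split /= !scalerDl; congr (_ + _ - _).
      by apply: eq_bigr => i _; rewrite mxE scalerDl.
    + by rewrite h2 h2' opprD.
  - move=> t p ht _ [u [mu [la [hu hmu hla h1 h2]]]].
    exists (t *: u), (t * mu), (t * la); split => /=.
    + by move=> i; rewrite mxE mulr_ge0.
    + exact: mulr_ge0.
    + exact: mulr_ge0.
    + rewrite h1 scalerBr scalerDr scaler_sumr !scalerA; congr (_ + _ - _).
      by apply: eq_bigr => i _; rewrite mxE scalerA.
    + by rewrite h2 mulrN.
have [u [mu [la [hu hmu hla h1 h2]]]] := HR _ hc.
move: h1 h2 => /= /esym h1 h2.
have hla0 : 0 < la by lra.
move: h1; rewrite (eq_bigr (fun i => col_mx (u i 0 *: (row i AR)^T) (u i 0 *: (b i 0)%:M))); last first.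
  by move=> i _; rewrite scale_col_mx.
rewrite sum_col_mx !scale_col_mx opp_col_mx !add_col_mx -col_mx0 => /eq_col_mx [Htop Hbot].
have Etop j : \sum_i u i 0 * AR i j = la * c j 0.
  have := congr1 (fun M : 'cV[R]_n => M j 0) Htop.
  rewrite !mxE summxE => /eqP; rewrite mulr0 addr0 subr_eq0 => /eqP <-.
  by apply: eq_bigr => i _; rewrite !mxE.
have Ebot : \sum_i u i 0 * b i 0 + mu = la * d.
  have := congr1 (fun M : 'cV[R]_1 => M 0 0) Hbot.
  rewrite !mxE summxE => /eqP; rewrite subr_eq0 => /eqP <-.
  rewrite ?mulr1 ?mulr1n; congr (_ + _).
  by apply: eq_bigr => i _; rewrite !mxE /= ?mulr1 ?mulr1n.
exists (la^-1 *: u); split.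
- by move=> i; rewrite mxE mulr_ge0 // invr_ge0 ltW.
- apply/matrixP => j k; rewrite (ord1 k) -scalemxAr !mxE.
  rewrite (eq_bigr (fun i => u i 0 * AR i j)); last by move=> i _; rewrite mxE mulrC.
  by rewrite Etop mulrA mulVf ?mul1r // gt_eqF.
- rewrite linZ linE (eq_bigr (fun i => u i 0 * b i 0)); last by move=> i _; rewrite mulrC.
  have -> : \sum_i u i 0 * b i 0 = la * d - mu by rewrite -Ebot addrK.
  rewrite ler_pdivrMl //; lra.
Qed.

End Farkas.

Section Cara.
Variable R : realType.

Lemma drop_sum k (F : 'I_k.+1 -> R) i0 : F i0 = 0 -> \sum_i F i = \sum_j F (lift i0 j).
Proof. by move=> h; rewrite (bigD1_ord i0) //= h add0r. Qed.

Lemma rowsub_mulE k m n (f : 'I_k -> 'I_m) (M : 'M[R]_(m, n)) (y : 'cV[R]_n) i :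
  (rowsub f M *m y) i 0 = (M *m y) (f i) 0.
Proof. by rewrite !mxE; apply: eq_bigr => j _; rewrite mxE. Qed.

Lemma linNr n (a y : 'cV[R]_n) : lin a (- y) = - lin a y.
Proof. by rewrite /lin mulmxN mxE. Qed.

Lemma not_free_ker k n (B : 'M[R]_(k, n)) : ~~ row_free B ->
  exists2 v : 'rV[R]_k, v *m B = 0 & v != 0.
Proof.
move=> hB; case: (pselect (exists2 v : 'rV[R]_k, v *m B = 0 & v != 0)) => // H.
exfalso; move/negP: hB; apply; apply: inj_row_free => v hv.
by apply/eqP/negPn/negP => hv0; apply: H; exists v.
Qed.

Lemma caratheodory m n (AR : 'M[R]_(m, n)) (b : 'cV[R]_m) (c : 'cV[R]_n) (d : R) :
  (exists y, polyhedron AR b y) ->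
  forall k (f : 'I_k -> 'I_m) (u : 'cV[R]_k), injective f -> (forall i, 0 <= u i 0) ->
  (rowsub f AR)^T *m u = c -> lin (rowsub f b) u <= d ->
  exists k' (f' : 'I_k' -> 'I_m) (u' : 'cV[R]_k'), [/\ injective f', (forall i, 0 <= u' i 0),
    (rowsub f' AR)^T *m u' = c, lin (rowsub f' b) u' <= d & row_free (rowsub f' AR)].
Proof.
move=> [y0 Py0]; elim => [|k IH] f u finj hu hc hd.
  exists 0, f, u; split => //; apply: inj_row_free => v _; exact: thinmx0.
set B := rowsub f AR; set bf := rowsub f b.
case: (boolP (row_free B)) => hfree; first by exists k.+1, f, u.
have [v hv v0] := not_free_ker hfree.
have hbw (w : 'cV[R]_k.+1) : w^T *m B = 0 -> (forall i, 0 <= w i 0) -> 0 <= lin bf w.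
  move=> hw hw0; rewrite linE.
  have e2 : \sum_i (B *m y0) i 0 * w i 0 = 0.
    have e1 : (w^T *m (B *m y0)) 0 0 = 0 by rewrite mulmxA hw mul0mx mxE.
    rewrite -[RHS]e1 mxE; apply: eq_bigr => i _; rewrite [w^T _ _]mxE mulrC //.
  rewrite -[X in X <= _]e2; apply: ler_sum => i _; apply: ler_wpM2r => //.
  by rewrite /bf /B rowsub_mulE [rowsub f b _ _]mxE; exact: (Py0 (f i)).
have [w2 [hw2 hw2b [i1 hi1]]] : exists w2 : 'cV[R]_k.+1,
    [/\ w2^T *m B = 0, lin bf w2 <= 0 & exists i, w2 i 0 < 0].
  pose w1 := if lin bf v^T <= 0 then v^T else - v^T.
  have hw1 : w1^T *m B = 0.
    by rewrite /w1; case: ifP => _; rewrite ?linearN /= ?mulNmx trmxK hv ?oppr0.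
  have hw1b : lin bf w1 <= 0.
    rewrite /w1; case: ifP => // /negbT; rewrite -ltNge linNr => h.
    by rewrite oppr_le0 ltW.
  have hw10 : w1 != 0.
    rewrite /w1; case: ifP => _; rewrite ?oppr_eq0; apply: contra v0 => /eqP h;
    by rewrite -(trmxK v) h linear0.
  case: (boolP [exists i, w1 i 0 < 0]) => [/existsP [i hi]|/existsPn hall].
    by exists w1; split => //; exists i.
  have hpos : forall i, 0 <= w1 i 0 by move=> i; have := hall i; rewrite -leNgt.
  have hz : lin bf w1 = 0 by apply/eqP; rewrite eq_le hw1b hbw.
  have [i hi] : exists i, w1 i 0 != 0.
    apply: contra_notP (negP hw10) => H; apply/eqP/matrixP => i j.
    by rewrite (ord1 j) mxE; apply: contra_notP H => h; exists i; apply/eqP.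
  exists (- w1); split.
  - by rewrite linearN /= mulNmx hw1 oppr0.
  - by rewrite linNr hz oppr0.
  - exists i; rewrite mxE oppr_lt0 lt_def hi; exact: hpos.
case: (@arg_minP _ _ _ i1 (fun i => w2 i 0 < 0) (fun i => u i 0 / - w2 i 0) hi1) => i0 hi0 hmin.
set t := u i0 0 / - w2 i0 0.
have ht : 0 <= t by rewrite /t divr_ge0 // oppr_ge0 ltW.
pose u' := u + t *: w2.
have hu' : forall i, 0 <= u' i 0.
  move=> i; rewrite /u' mxDZE.
  case: (ltP (w2 i 0) 0) => h.
    have h' : 0 < - w2 i 0 by rewrite oppr_gt0.
    have := @frac_le3 _ _ _ _ h' (hmin i h); rewrite -/t mulrN; lra.
  by rewrite addr_ge0 // mulr_ge0.
have hu'0 : u' i0 0 = 0.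
  rewrite /u' mxDZE /t invrN mulrN mulNr mulfVK ?subrr //.
  by rewrite lt_eqF.
have hc' : B^T *m u' = c.
  rewrite mulmxDr -scalemxAr hc.
  have -> : B^T *m w2 = 0 by rewrite -(trmxK (B^T *m w2)) trmx_mul trmxK hw2 linear0.
  by rewrite scaler0 addr0.
have hd' : lin bf u' <= d.
  rewrite linD linZ; have : t * lin bf w2 <= 0 by rewrite mulr_ge0_le0.
  lra.
clearbody u'.
have := IH (f \o lift i0) (row' i0 u') _ _ _ _.
case.
- by move=> x y /= /finj /lift_inj.
- by move=> i; rewrite mxE.
- apply/matrixP => j l; rewrite (ord1 l) -hc' !mxE (drop_sum _ (i0 := i0)).
    by apply: eq_bigr => i _; rewrite !mxE.
  by rewrite !mxE hu'0 mulr0.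
- rewrite !linE (drop_sum _ (i0 := i0)) in hd'; last by rewrite hu'0 mulr0.
  by move: hd'; congr (_ <= _); rewrite linE; apply: eq_bigr => i _; rewrite !mxE.
move=> k' [f' [u'' H]]; by exists k', f', u''.
Qed.

End Cara.

Section Cramer.
Variable R : realType.

Lemma Delta_ge m n (A : 'M[int]_(m, n)) p (F : 'I_p.+1 -> 'I_m) (G : 'I_p.+1 -> 'I_n) :
  injective F -> injective G -> (`|\det (mxsub F G A)|%N <= Delta A)%N.
Proof.
move=> hF hG.
have hm := leq_card F hF; have hn := leq_card G hG; rewrite !card_ord in hm hn.
have hp : (p < minn m n)%N by rewrite leq_min hm hn.
rewrite /Delta.
apply: leq_trans (leq_bigmax_cond (F := fun k : 'I_(minn m n) => \max_(f : {ffun 'I_k.+1 -> 'I_m} | injectiveb f) \max_(g : {ffun 'I_k.+1 -> 'I_n} | injectiveb g) `|\det (mxsub f g A)|%N) (Ordinal hp) isT).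
apply: leq_trans (leq_bigmax_cond [ffun x => F x] _); last first.
  by apply/injectiveP => x y; rewrite !ffunE => /hF.
apply: leq_trans (leq_bigmax_cond [ffun x => G x] _); last first.
  by apply/injectiveP => x y; rewrite !ffunE => /hG.
by rewrite mxsub_ffun.
Qed.

Lemma sum_inj_le k n (g : 'I_k -> 'I_n) (F : 'I_n -> R) : injective g -> (forall j, 0 <= F j) ->
  \sum_l F (g l) <= \sum_j F j.
Proof.
move=> ginj hF.
have -> : \sum_l F (g l) = \sum_(j in g @: [set: 'I_k]%SET) F j.
  rewrite big_imset /=; last exact: in2W ginj.
  by apply: eq_bigl => i; rewrite finset.in_setT.
rewrite [X in _ <= X](bigID (mem (g @: [set: 'I_k]%SET))) /= lerDl.
by apply: sumr_ge0.
Qed.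

Lemma intr_abs_ge (z : int) (D : nat) : (`|z|%N <= D)%N -> `|(z%:~R : R)| <= D%:R.
Proof. by move=> h; rewrite -intr_norm -natr_absz ler_nat. Qed.

Lemma adj_bound m n (A : 'M[int]_(m, n)) k (f : 'I_k.+1 -> 'I_m) (g : 'I_k.+1 -> 'I_n) :
  injective f -> injective g -> \det (mxsub f g A) != 0 ->
  forall i l, `|\adj (map_mx (intr : {rmorphism int -> R}) (mxsub f g A)^T) i l| <= (Delta A)%:R.
Proof.
move=> finj ginj hdet i l.
rewrite mxE /cofactor normrM normrX normrN1 expr1n mul1r.
case: k f g finj ginj hdet i l => [|p] f g finj ginj hdet i l.
  rewrite det_mx00 normr1.
  have := Delta_ge A finj ginj; rewrite -absz_gt0 in hdet.
  move=> h; rewrite ler1n; exact: leq_trans hdet h.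
have -> : row' l (col' i (map_mx (intr : {rmorphism int -> R}) (mxsub f g A)^T)) =
   map_mx (intr : {rmorphism int -> R}) (mxsub (f \o lift i) (g \o lift l) A)^T.
  by apply/matrixP => x y; rewrite !mxE.
rewrite det_map_mx det_tr; apply: intr_abs_ge; apply: Delta_ge.
  by move=> x y /= /finj /lift_inj.
by move=> x y /= /ginj /lift_inj.
Qed.

Lemma cramer m n (A : 'M[int]_(m, n)) k (f : 'I_k -> 'I_m) (u : 'cV[R]_k) (c : 'cV[R]_n) :
  injective f -> (forall i, 0 <= u i 0) -> (rowsub f (@mxR R _ _ A))^T *m u = c ->
  row_free (rowsub f (@mxR R _ _ A)) ->
  \sum_i u i 0 <= n%:R * (Delta A)%:R * norm1 c.
Proof.
move=> finj hu hc hfree.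
have hc1 : 0 <= norm1 c by apply: sumr_ge0 => j _.
case: k f u finj hu hc hfree => [|k] f u finj hu hc hfree.
  by rewrite big_ord0 !mulr_ge0.
set B := rowsub f (@mxR R _ _ A) in hc hfree.
have hrk : \rank B = k.+1 by apply/eqP.
have hfull : row_full B^T by rewrite /row_full mxrank_tr hrk.
set g := fullrankfun hfull.
have ginj : injective g := @fullrankfun_inj _ _ _ _ hfull.
have Gu : rowsub g B^T \in unitmx := fullrowsub_unit hfull.
have kn : (k.+1 <= n)%N by rewrite -hrk rank_leq_col.
have GN : rowsub g B^T = map_mx (intr : {rmorphism int -> R}) (mxsub f g A)^T.
  by apply/matrixP => l i; rewrite !mxE.
rewrite GN in Gu.
have hdetN : \det (mxsub f g A) != 0.
  move: Gu; rewrite unitmxE unitfE det_map_mx det_tr intr_eq0 //.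
have hDN := Delta_ge A finj ginj.
have hdet1 : 1 <= `|\det (map_mx (intr : {rmorphism int -> R}) (mxsub f g A)^T)|.
  rewrite det_map_mx det_tr -intr_norm -natr_absz ler1n absz_gt0 //.
set G := map_mx (intr : {rmorphism int -> R}) (mxsub f g A)^T in Gu hdet1 GN.
have HGu : G *m u = rowsub g c.
  by apply/matrixP => l z; rewrite (ord1 z) -GN -hc [RHS]mxE rowsub_mulE.
have Hadj : \det G *: u = \adj G *m rowsub g c.
  by rewrite -HGu mulmxA mul_adj_mx mul_scalar_mx.
have hui i : u i 0 <= (Delta A)%:R * norm1 c.
  have e := congr1 (fun M : 'cV[R]_k.+1 => M i 0) Hadj; rewrite /= mxE mxE in e.
  apply: le_trans (_ : `|\det G| * u i 0 <= _).
    by rewrite ler_peMl.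
  rewrite -(ger0_norm (hu i)) -normrM e.
  apply: le_trans (ler_norm_sum _ _ _) _.
  rewrite /norm1 mulr_sumr.
  apply: le_trans (_ : \sum_l (Delta A)%:R * `|c (g l) 0| <= _); last first.
    by apply: (sum_inj_le (F := fun j => (Delta A)%:R * `|c j 0|) ginj) => j; rewrite mulr_ge0.
  apply: ler_sum => l _; rewrite normrM [rowsub g c _ _]mxE ler_wpM2r //.
  exact: adj_bound.
apply: le_trans (_ : \sum_(i < k.+1) (Delta A)%:R * norm1 c <= _).
  by apply: ler_sum => i _; apply: hui.
rewrite sumr_const card_ord -(mulr_natl ((Delta A)%:R * norm1 c) k.+1) mulrA.
apply: ler_wpM2r => //; apply: ler_wpM2r => //; by rewrite ler_nat.
Qed.

End Cramer.

Section Final.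
Local Open Scope classical_set_scope.

Lemma lin_sum (R : realType) n k (a : 'cV[R]_n) (w : 'I_k -> R) (p : 'I_k -> 'cV[R]_n) :
  lin a (\sum_i w i *: p i) = \sum_i w i * lin a (p i).
Proof.
rewrite /lin mulmx_sumr summxE; apply: eq_bigr => i _; by rewrite -scalemxAr mxE.
Qed.

Lemma rowsub_idE (R : realType) m n (M : 'M[R]_(m, n)) : rowsub id M = M.
Proof. by apply/matrixP => i j; rewrite mxE. Qed.

Lemma norminf_ge0 (R : realType) m (v : 'cV[R]_m) : 0 <= norminf v.
Proof. rewrite /norminf; elim/big_ind: _ => //= x y hx hy; by rewrite le_max hx. Qed.

Lemma norminf_le (R : realType) m (v : 'cV[R]_m) j : `|v j 0| <= norminf v.
Proof. exact: (le_bigmax 0 (fun i => `|v i 0|) j). Qed.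

End Final.

Unset Implicit Arguments.
Local Open Scope classical_set_scope.
Local Open Scope ring_scope.

Theorem theorem4p3 (R : realType) (m n : nat)
  (alpha : 'cV[int]_n) (S : set 'cV[R]_n)
  (A : 'M[int]_(m, n)) (b : 'cV[R]_m) (b' : 'cV[R]_m) :
  convex_set S ->
  conv (S `&` @Zpts R n) = polyhedron (mxR A) b ->
  polyhedron (mxR A) b !=set0 ->
  rec_cone S = polyhedron (mxR A) 0 ->
  (exists M : R, forall x, S x -> M <= lin (mxR alpha) x) ->
  (forall i : 'I_m, has_ubound [set lin (mxR (row i A)^T) x | x in S]) ->
  (forall i : 'I_m, b' i 0 = sup [set lin (mxR (row i A)^T) x | x in S]) ->
  inf [set lin (mxR alpha) x | x in S `&` @Zpts R n]
    - inf [set lin (mxR alpha) x | x in S]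
  <= n%:R * norm1 (mxR alpha) * (Delta A)%:R * (1 + norminf (b - b')).
Proof.
move=> _ Hconv [y0 Py0] _ [M HM] Hub Hb'.
set AR := @mxR R _ _ A.
set Z := [set lin (mxR alpha) x | x in S `&` @Zpts R n].
set T := [set lin (mxR alpha) x | x in S].
have Pconv y : polyhedron AR b y -> conv (S `&` @Zpts R n) y by rewrite Hconv.
have [x0 Sx0] : exists x0, (S `&` @Zpts R n) x0.
  have [k [w [p [hw hw1 hp _]]]] := Pconv _ Py0.
  case: k w p hw hw1 hp => [|k] w p hw hw1 hp.
    by move: hw1; rewrite big_ord0 => /eqP; rewrite eq_sym oner_eq0.
  by exists (p ord0).
have hlbZ : has_lbound Z by exists M => _ [x [Sx _] <-]; apply: HM.
set v := inf Z.
have hv : forall z, Z z -> v <= z by move=> z hz; apply: (ge_inf hlbZ).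
have hvP y : polyhedron AR b y -> v <= lin (mxR alpha) y.
  move=> /Pconv [k [w [p [hw hw1 hp ->]]]].
  rewrite lin_sum; apply: le_trans (_ : \sum_i w i * v <= _).
    by rewrite -mulr_suml hw1 mul1r.
  apply: ler_sum => i _; apply: ler_wpM2l => //; apply: hv; by exists (p i).
pose c := - (@mxR R _ _ alpha).
have [u [hu hc hd]] := @farkas_aff R m n AR b c (- v) (ex_intro _ y0 Py0)
  (fun y hy => ltac:(rewrite /c linNl lerN2; exact: hvP)).
have [k [f [uf [finj huf hcf hdf hfree]]]] :=
  @caratheodory R m n AR b c (- v) (ex_intro _ y0 Py0) m id u (fun x y h => h) hu
    (ltac:(by rewrite rowsub_idE)) (ltac:(by rewrite rowsub_idE)).
have hK := @cramer R m n A k f uf c finj huf hcf hfree.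
have hnc : norm1 c = norm1 (mxR alpha).
  by rewrite /norm1; apply: eq_bigr => j _; rewrite mxE normrN.
rewrite hnc in hK.
set K := n%:R * (Delta A)%:R * norm1 (mxR alpha) in hK.
set dl := norminf (b - b').
have hdl : 0 <= dl by apply: norminf_ge0.
have hbb j : b' j 0 <= b j 0 + dl.
  have := norminf_le (b - b') j; rewrite -/dl mxE [(- b') _ _]mxE.
  have := ler_norm (b' j 0 - b j 0); rewrite distrC; lra.
have hT x : S x -> v - dl * K <= lin (mxR alpha) x.
  move=> Sx.
  have e : lin (mxR alpha) x = - lin uf (rowsub f AR *m x).
    rewrite -[mxR alpha]opprK -/c linNl -hcf /lin trmx_mul trmxK mulmxA //.
  rewrite e linE.
  have hle : \sum_i uf i 0 * (rowsub f AR *m x) i 0 <= \sum_i uf i 0 * (b (f i) 0 + dl).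
    apply: ler_sum => i _; apply: ler_wpM2l => //.
    rewrite rowsub_mulE; apply: le_trans (hbb (f i)); rewrite Hb'.
    apply: (ub_le_sup (Hub (f i))); exists x => //.
    by rewrite /AR /mxR -map_trmx map_row lin_row.
  have e2 : \sum_i uf i 0 * (b (f i) 0 + dl) = lin (rowsub f b) uf + dl * \sum_i uf i 0.
    rewrite linE mulr_sumr -big_split; apply: eq_bigr => i _; rewrite mxE /=; ring.
  have : dl * \sum_i uf i 0 <= dl * K by apply: ler_wpM2l.
  lra.
have hTinf : v - dl * K <= inf T.
  apply: lb_le_inf; first by exists (lin (mxR alpha) x0); exists x0 => //; case: Sx0.
  by move=> _ [x Sx <-]; apply: hT.
have hK0 : 0 <= K by rewrite /K !mulr_ge0 //; apply: sumr_ge0.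
have -> : n%:R * norm1 (mxR alpha) * (Delta A)%:R * (1 + dl) = (1 + dl) * K.
  by rewrite /K; ring.
have : dl * K <= (1 + dl) * K by apply: ler_wpM2r => //; lra.
rewrite -/v; lra.
Qed.
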